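(* Let $k\ge 2$ and let $p,q$ be real polynomials with $\deg p=k$, $\deg q=k-1$, all of whose roots are real and simple and strictly interlace. For each $\alpha\in\mathbb{R}$ let $p_1(\alpha)<\dots<p_k(\alpha)$ be the roots of $p+\alpha q$ (these are real and simple), let $D_j(\alpha)$ ($1\le j\le k-1$) be the open disk having $[p_j(\alpha),p_{j+1}(\alpha)]$ as a diameter, $D_0(\alpha)$ the open disk having $[p_1(\alpha),p_k(\alpha)]$ as a diameter, and $\Omega_p(\alpha)=\overline{D_0(\alpha)}\setminus\bigcup_{j=1}^{k-1}D_j(\alpha)$. Then all roots of $W(p,q)=p'q-q'p$ lie in $\bigcap_{\alpha\in\mathbb{R}}\Omega_p(\alpha)$.
   Context: ''Strictly interlace'' means that between any two consecutive roots of $p$ there is exactly one root of $q$ and vice versa: $p_1<q_1<p_2<\dots<q_{k-1}<p_k$. A disk ''having a segment $[a,b]$ as a diameter'' is the disk centered at $\frac{a+b}2$ of radius $\frac{b-a}2$. *)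

(* Defs.v *)
(* Complex numbers: an arbitrary numClosedFieldType C
   (algebraically closed field with conjugation/order on reals);
   "real" means Num.real. *)
From HB Require Import structures.
From mathcomp Require Import all_boot all_order all_algebra.
Set Implicit Arguments. Unset Strict Implicit. Unset Printing Implicit Defensive.
Import Order.TTheory GRing.Theory Num.Theory.
Local Open Scope ring_scope.

Section Defs.
Variable C : numClosedFieldType.

Definition roots_are (p : {poly C}) (s : seq C) : Prop :=
  forall z, root p z = (z \in s).

Definition real_simple_roots (p : {poly C}) : Prop :=
  forall z, root p z -> (z \is Num.real) && ~~ root p^`() z.

Definition incr_reals (s : seq C) : Prop :=
  all (fun x => x \is Num.real) s /\
  forall i, (i.+1 < size s)%N -> s`_i < s`_i.+1.

Definition strictly_interlace (p q : {poly C}) : Prop :=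
  exists (s t : seq C),
    roots_are p s /\ roots_are q t /\
    all (fun x => x \is Num.real) s /\ all (fun x => x \is Num.real) t /\
    size s = (size t).+1 /\
    (forall i, (i < size t)%N -> s`_i < t`_i /\ t`_i < s`_i.+1).

Definition in_open_disk (a b z : C) : Prop := `|z - (a + b) / 2| < (b - a) / 2.
Definition in_closed_disk (a b z : C) : Prop := `|z - (a + b) / 2| <= (b - a) / 2.

(* Omega_p(alpha) given the increasing list r = [p_1(alpha);...;p_k(alpha)] *)
Definition in_Omega (r : seq C) (z : C) : Prop :=
  in_closed_disk (head 0 r) (last 0 r) z /\
  forall j, (j.+1 < size r)%N -> ~ in_open_disk r`_j r`_j.+1 z.

Definition Wr (p q : {poly C}) : {poly C} := p^`() * q - q^`() * p.

End Defs.

(* Main.v *)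
Require Import Defs.
From HB Require Import structures.
From mathcomp Require Import all_boot all_order all_algebra.
From Stdlib Require Import Ring Field.
Import Order.TTheory GRing.Theory Num.Theory.
Local Open Scope ring_scope.

Definition radd (R : comNzRingType) : R -> R -> R := +%R.
Definition rmul (R : comNzRingType) : R -> R -> R := *%R.
Definition ropp (R : comNzRingType) : R -> R := -%R.
Definition rzero (R : comNzRingType) : R := 0.
Definition rone (R : comNzRingType) : R := 1.
Definition finv (F : fieldType) : F -> F := GRing.inv.

Section RingId.
Variable R : comNzRingType.
Lemma RRth : @ring_theory R (rzero R) (rone R) (radd R) (rmul R)
  (fun x y => radd R x (ropp R y)) (ropp R) (@eq R).
Proof.
split=> //; rewrite /radd /rmul /rzero /rone /ropp;
 [exact: add0r|exact: addrC|exact: addrA|exact: mul1r|exact: mulrC|exact: mulrA|exact: mulrDl|exact: subrr].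
Qed.
Add Ring RRing : RRth.
Ltac rfold := rewrite ?expr2 -/(radd R) -/(rmul R) -/(ropp R) -/(rzero R) -/(rone R);
  match goal with |- @eq _ ?a ?b => change (@eq R a b) end.

Lemma id_wr1 (Q Q' X : R) : (Q + X * Q') * Q - Q' * (X * Q) = Q ^+ 2.
Proof. rfold. ring. Qed.
Lemma id_wr2 (p p' q q' a : R) :
  (p' + a * q') * q - q' * (p + a * q) = p' * q - q' * p.
Proof. rfold. ring. Qed.
Lemma id_sum3 (b e al be y : R) :
  b * ((e - al) * (e - be)) = b * (e ^+ 2 - y ^+ 2) - (al + be) * (b * e) + (al * be + y ^+ 2) * b.
Proof. rfold. ring. Qed.
Lemma id_re (a b c : R) : a * b * (b * c) = b * (b * (a * c)).
Proof. rfold. ring. Qed.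
End RingId.

Definition cadd (C : numClosedFieldType) : C -> C -> C := +%R.
Definition cmul (C : numClosedFieldType) : C -> C -> C := *%R.
Definition copp (C : numClosedFieldType) : C -> C := -%R.
Definition cinv (C : numClosedFieldType) : C -> C := GRing.inv.
Definition czero (C : numClosedFieldType) : C := 0.
Definition cone (C : numClosedFieldType) : C := 1.
Lemma CFth (C : numClosedFieldType) : @field_theory C (czero C) (cone C) (cadd C) (cmul C)
  (fun x y => cadd C x (copp C y)) (copp C) (fun x y => cmul C x (cinv C y)) (cinv C) (@eq C).
Proof.
split=> //; rewrite /cadd /cmul /czero /cone /copp /cinv.
split=> //; [exact: add0r|exact: addrC|exact: addrA|exact: mul1r|exact: mulrC|exact: mulrA|exact: mulrDl|exact: subrr].
by apply/eqP; rewrite oner_eq0.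
move=> p /eqP; exact: mulVf.
Qed.
Section Poly.
Variable C : numClosedFieldType.
Add Field CF : (CFth C).
Ltac cfold := rewrite ?expr2 -/(cadd C) -/(cmul C) -/(copp C) -/(cinv C) -/(czero C) -/(cone C);
  match goal with |- @eq _ ?a ?b => change (@eq C a b) end.

Definition Pp (l : C) (s : seq C) : {poly C} :=
  l *: \prod_(j < size s) ('X - (s`_j)%:P).
Definition Qp (l : C) (s : seq C) (i : 'I_(size s)) : {poly C} :=
  l *: \prod_(j < size s | j != i) ('X - (s`_j)%:P).

Lemma Pp_fact l s (i : 'I_(size s)) : Pp l s = ('X - (s`_i)%:P) * Qp l s i.
Proof. by rewrite /Pp /Qp (bigD1 i) //= scalerAr. Qed.

Lemma hornerQp l s i x :
  (Qp l s i).[x] = l * \prod_(j < size s | j != i) (x - s`_j).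
Proof.
rewrite /Qp hornerZ horner_prod; congr (_ * _).
by apply: eq_bigr => j _; rewrite hornerXsubC.
Qed.

Lemma hornerPp l s x : (Pp l s).[x] = l * \prod_(j < size s) (x - s`_j).
Proof.
rewrite /Pp hornerZ horner_prod; congr (_ * _).
by apply: eq_bigr => j _; rewrite hornerXsubC.
Qed.

Lemma Qp_vanish l s (i j : 'I_(size s)) : j != i -> (Qp l s i).[s`_j] = 0.
Proof.
move=> ji; by rewrite hornerQp (bigD1 j) //= subrr mul0r mulr0.
Qed.

Lemma Qp_nz l s i : uniq s -> l != 0 -> (Qp l s i).[s`_i] != 0.
Proof.
move=> us l0; rewrite hornerQp mulf_neq0 //; apply/prodf_neq0 => j ji.
rewrite subr_eq0; apply/negP => /eqP/esym h.
move: ji; rewrite -(inj_eq val_inj) /=.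
by rewrite -(nth_uniq 0 _ _ us) ?h ?eqxx // ltn_ord.
Qed.

Lemma size_Qp l s i : (size (Qp l s i) <= size s)%N.
Proof.
apply: leq_trans (size_scale_leq _ _) _.
rewrite -big_filter size_prod_XsubC size_filter.
have h1 := count_predC (pred1 i) (index_enum 'I_(size s)).
have h2 : count (pred1 i) (index_enum 'I_(size s)) = 1%N.
  by rewrite (count_uniq_mem _ (index_enum_uniq _)) mem_index_enum.
have h3 : size (index_enum 'I_(size s)) = size s.
  by rewrite /index_enum -enumT size_enum_ord.
have -> : count (fun i0 => i0 != i) (index_enum 'I_(size s)) =
          count (predC (pred1 i)) (index_enum 'I_(size s)) by [].
move: h1; rewrite h2 h3; move: (count _ _) => c <-; by rewrite add1n ltnSn.
Qed.

Definition lcoef (l : C) (s : seq C) (q : {poly C}) (i : 'I_(size s)) : C :=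
  q.[s`_i] / (Qp l s i).[s`_i].

Lemma lagrange (l : C) (s : seq C) (q : {poly C}) : uniq s -> l != 0 -> (size q <= size s)%N ->
  q = \sum_(i < size s) lcoef l s q i *: Qp l s i.
Proof.
move=> us l0 sq; apply/eqP; rewrite -subr_eq0; apply/eqP.
apply: (roots_geq_poly_eq0 _ us).
- apply/(all_nthP 0) => i ilt; rewrite /root hornerD hornerN horner_sum.
  rewrite (bigD1 (Ordinal ilt)) //= big1 ?addr0.
    by rewrite hornerZ /lcoef divfK ?subrr // (@Qp_nz l s (Ordinal ilt)).
  move=> j ji; rewrite hornerZ (@Qp_vanish l s j (Ordinal ilt)) ?mulr0 //.
  by rewrite eq_sym.
- apply: leq_trans (size_polyD _ _) _; rewrite geq_max sq size_polyN /=.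
  apply: leq_trans (size_sum _ _ _) _.
  apply/bigmax_leqP => i _; apply: leq_trans (size_scale_leq _ _) _.
  exact: size_Qp.
Qed.

Lemma wr_decomp (l : C) (s : seq C) (q : {poly C}) : uniq s -> l != 0 -> (size q <= size s)%N ->
  Wr (Pp l s) q = \sum_(i < size s) lcoef l s q i *: (Qp l s i) ^+ 2.
Proof.
move=> us l0 sq; rewrite /Wr {1 2}(@lagrange l s q us l0 sq) raddf_sum /=.
rewrite mulr_sumr mulr_suml -sumrB; apply: eq_bigr => i _.
rewrite (Pp_fact l s i); move: (Qp l s i) => Q.
rewrite derivM derivXsubC mul1r derivZ -scalerAr -scalerAl -scalerBr.
congr (_ *: _).
exact: id_wr1.
Qed.
End Poly.
Arguments Pp {C}.
Arguments Qp {C}.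
Arguments lcoef {C}.
Arguments Pp_fact {C}.
Arguments hornerQp {C}.
Arguments hornerPp {C}.
Arguments Qp_vanish {C}.
Arguments Qp_nz {C}.
Arguments wr_decomp {C}.
Arguments lagrange {C}.
Section Fact.
Variable C : numClosedFieldType.

Lemma fact_roots (p : {poly C}) (s : seq C) :
  size p = (size s).+1 -> uniq s -> all (root p) s -> p = Pp (lead_coef p) s.
Proof.
move=> sp us rs.
have [g pg] := uniq_roots_prod_XsubC rs (etrans (uniq_rootsE s) us).
have p0 : p != 0 by rewrite -size_poly_eq0 sp.
have g0 : g != 0 by apply: contraNneq p0 => g0; rewrite pg g0 mul0r.
have m0 : \prod_(z <- s) ('X - z%:P) != 0 :> {poly C}.
  by rewrite monic_neq0 // monic_prod_XsubC.
have : size g == 1%N.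
  move: sp; rewrite pg size_mul // size_prod_XsubC addnS /= => /eqP.
  by rewrite -addn1 addnC eqn_add2l.
case/size_poly1P => c c0 gc.
have lp : lead_coef p = c.
  by rewrite pg gc lead_coefM lead_coefC (monicP (monic_prod_XsubC _ _ _)) mulr1.
rewrite lp {1}pg gc mul_polyC /Pp; congr (_ *: _).
by rewrite (big_nth 0) big_mkord.
Qed.

Lemma split_size (p : {poly C}) (s : seq C) : p != 0 -> uniq s -> roots_are p s ->
  (forall z, root p z -> ~~ root p^`() z) -> size p = (size s).+1.
Proof.
move=> p0 us H simp.
have rs : all (root p) s by apply/allP => z zs; rewrite H.
have [g pg] := uniq_roots_prod_XsubC rs (etrans (uniq_rootsE s) us).
have g0 : g != 0 by apply: contraNneq p0 => g0; rewrite pg g0 mul0r.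
have m0 : \prod_(z <- s) ('X - z%:P) != 0 :> {poly C}.
  by rewrite monic_neq0 // monic_prod_XsubC.
have sz : size p = (size g + size s)%N.
  by rewrite pg size_mul // size_prod_XsubC addnS.
have [g1|g1] := eqVneq (size g) 1%N; first by rewrite sz g1 add1n.
have [w gw] := closed_rootP g g1.
have pw : root p w by rewrite pg rootM gw.
have ws : w \in s by rewrite -H.
have [g2 gg2] := factor_theorem g w gw.
have e : p = ('X - w%:P) * (('X - w%:P) * (g2 * \prod_(y <- rem w s) ('X - y%:P))).
  by rewrite pg gg2 (big_rem w ws) -id_re.
have h := simp w pw; rewrite e in h; exfalso; move/negP: h; apply.
rewrite derivM derivXsubC mul1r /root hornerD !hornerM hornerXsubC subrr !mul0r add0r.
by [].
Qed.
End Fact.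
Arguments fact_roots {C}.
Arguments split_size {C}.
Section Order.
Variable C : numClosedFieldType.

Definition incr (s : seq C) := forall i, (i.+1 < size s)%N -> s`_i < s`_i.+1.

Lemma incr_lt s i j : incr s -> (i < j)%N -> (j < size s)%N -> s`_i < s`_j.
Proof.
move=> hs; elim: j => // j IH; rewrite ltnS leq_eqVlt => /orP[/eqP->|ij] js.
  exact: hs.
exact: lt_trans (IH ij (ltnW js)) (hs _ js).
Qed.

Lemma incr_le s i j : incr s -> (i <= j)%N -> (j < size s)%N -> s`_i <= s`_j.
Proof.
move=> hs; rewrite leq_eqVlt => /orP[/eqP->|ij] js //.
exact: ltW (@incr_lt s i j hs ij js).
Qed.

Lemma incr_uniq s : incr s -> uniq s.
Proof.
move=> hs; apply/(uniqP 0) => i j; rewrite !inE => ilt jlt eij.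
case: (ltngtP i j) => // ij.
  by move: (@incr_lt s i j hs ij jlt); rewrite eij ltxx.
by move: (@incr_lt s j i hs ij ilt); rewrite eij ltxx.
Qed.

Lemma prod_sign (f : nat -> C) m n : (m <= n)%N ->
  (forall j, (j < m)%N -> 0 < f j) -> (forall j, (m <= j)%N -> (j < n)%N -> f j < 0) ->
  0 < (-1) ^+ (n - m) * \prod_(j < n) f j.
Proof.
move=> + hp hn; elim: n hn => [|n IH] hn.
  by rewrite leqn0 => /eqP ->; rewrite big_ord0 mulr1 expr0 ltr01.
rewrite leq_eqVlt => /orP[/eqP mn|]; last rewrite ltnS => mn.
  rewrite mn subnn expr0 mul1r; apply: prodr_gt0 => j _; apply: hp.
  by rewrite mn ltn_ord.
rewrite big_ord_recr /= subSn // exprSr mulrACA.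
apply: mulr_gt0; last by rewrite mulN1r oppr_gt0; apply: hn.
by apply: IH => // j mj jn; apply: hn => //; apply: ltnW.
Qed.
End Order.
Arguments incr {C}.
Arguments incr_lt {C s i j}.
Arguments incr_le {C s i j}.
Arguments incr_uniq {C s}.
Section Main1.
Variable C : numClosedFieldType.
Add Field CF : (CFth C).
Ltac cfold := rewrite ?expr2 -/(cadd C) -/(cmul C) -/(copp C) -/(cinv C) -/(czero C) -/(cone C);
  match goal with |- @eq _ ?a ?b => change (@eq C a b) end.

Lemma fid1 (a b A B E : C) : b != 0 -> B != 0 -> E != 0 ->
  a * b * (a * A / (b * B)) = a * a * ((E * A) / (E * B)).
Proof. move=> /eqP b0 /eqP B0 /eqP E0; cfold; field; tauto. Qed.

Lemma d_sign (q : {poly C}) (lp lq : C) (s t : seq C) :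
  incr s -> size s = (size t).+1 ->
  (forall i, (i < size t)%N -> s`_i < t`_i /\ t`_i < s`_i.+1) ->
  q = Pp lq t -> lp != 0 -> lq \is Num.real -> lq != 0 ->
  forall i : 'I_(size s), 0 < (lq * lp) * lcoef lp s q i.
Proof.
move=> hs ss hi qe lp0 lqR lq0 i.
have ilt := ltn_ord i.
set e := (size t - i)%N.
have hA : 0 < (-1) ^+ e * \prod_(j < size t) (s`_i - t`_j).
  apply: (@prod_sign C (fun j => s`_i - t`_j)).
  - by rewrite -ltnS -ss.
  - move=> j ji; rewrite subr_gt0; have jt : (j < size t)%N.
      by apply: leq_trans ji _; rewrite -ltnS -ss.
    apply: lt_le_trans (proj2 (hi j jt)) _; apply: incr_le => //.
  - move=> j ij jt; rewrite subr_lt0; apply: le_lt_trans (proj1 (hi j jt)).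
    by apply: incr_le => //; rewrite ss; apply: ltnW.
have hB : 0 < (-1) ^+ e * \prod_(j < size s) (if j != i :> nat then s`_i - s`_j else 1).
  have -> : e = (size s - i.+1)%N by rewrite [X in _ = (X - _)%N]ss subSS.
  apply: (@prod_sign C (fun j => if j != i :> nat then s`_i - s`_j else 1)).
  - exact: ilt.
  - move=> j; rewrite ltnS leq_eqVlt => /orP[/eqP->|ji]; first by rewrite eqxx ltr01.
    by rewrite neq_ltn ji /= subr_gt0; apply: incr_lt.
  - move=> j ij jn; rewrite (gtn_eqF ij) subr_lt0; exact: incr_lt.
have qsi : q.[s`_i] = lq * \prod_(j < size t) (s`_i - t`_j) by rewrite qe hornerPp.
have Qsi : (Qp lp s i).[s`_i] =
    lp * \prod_(j < size s) (if j != i :> nat then s`_i - s`_j else 1).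
  by rewrite hornerQp -big_mkcond.
rewrite /lcoef qsi Qsi (@fid1 lq lp _ _ ((-1) ^+ e)) //.
- apply: mulr_gt0; first by rewrite -expr2 real_exprn_even_gt0.
  exact: divr_gt0.
- by apply: contraTneq hB => ->; rewrite mulr0 ltxx.
- by rewrite expf_eq0 oppr_eq0 oner_eq0 andbF.
Qed.

Lemma termE (sg c : C) (Q : {poly C}) (x : C) :
  sg * (c *: Q ^+ 2).[x] = (sg * c) * Q.[x] ^+ 2.
Proof. by rewrite hornerZ horner_exp mulrA. Qed.

Lemma Qp_real (l : C) (s : seq C) (i : 'I_(size s)) (x : C) : l \is Num.real -> all (fun y => y \is Num.real) s ->
  x \is Num.real -> (Qp l s i).[x] \is Num.real.
Proof.
move=> lR sR xR; rewrite hornerQp rpredM // rpred_prod // => j _.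
by rewrite rpredB // (allP sR) // mem_nth.
Qed.

Lemma W_pos (q : {poly C}) (l sg : C) (s : seq C) :
  uniq s -> all (fun y => y \is Num.real) s -> (0 < size s)%N ->
  l \is Num.real -> l != 0 -> (size q <= size s)%N ->
  (forall i : 'I_(size s), 0 < sg * lcoef l s q i) ->
  forall x, x \is Num.real -> 0 < sg * (Wr (Pp l s) q).[x].
Proof.
move=> us sR s0 lR l0 sq hc x xR.
have [i0 Hi0] : exists i0 : 'I_(size s), (Qp l s i0).[x] != 0.
  case: (boolP (x \in s)) => xs.
    have ix : (index x s < size s)%N by rewrite index_mem.
    exists (Ordinal ix).
    by have := @Qp_nz _ l s (Ordinal ix) us l0; rewrite /= nth_index.
  exists (Ordinal s0); rewrite hornerQp mulf_neq0 //; apply/prodf_neq0 => j _.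
  rewrite subr_eq0; apply: contraNneq xs => ->; exact: mem_nth.
rewrite wr_decomp // horner_sum mulr_sumr (bigD1 i0) //= termE.
apply: ltr_wpDr.
  apply: sumr_ge0 => i _; rewrite termE; apply: mulr_ge0; first exact: ltW.
  by rewrite real_exprn_even_ge0 // Qp_real.
apply: mulr_gt0 => //; by rewrite real_exprn_even_gt0 // ?Qp_real // Hi0 orbT.
Qed.
End Main1.
Arguments d_sign {C}.
Arguments W_pos {C}.
Arguments Qp_real {C}.
Arguments termE {C}.
Section Geom.
Variable C : numClosedFieldType.
Add Field CF : (CFth C).
Ltac cfold := rewrite ?expr2 -/(cadd C) -/(cmul C) -/(copp C) -/(cinv C) -/(czero C) -/(cone C);
  match goal with |- @eq _ ?a ?b => change (@eq C a b) end.

Lemma Ci_conj (e y : C) : (e - 'i * y) * (e + 'i * y) = e ^+ 2 + y ^+ 2.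
Proof.
have h : (e - 'i * y) * (e + 'i * y) = e * e - ('i * 'i) * (y * y) by cfold; ring.
by rewrite h mulCii; cfold; ring.
Qed.

Lemma Ci_sq (e y : C) : (e - 'i * y) ^+ 2 = (e ^+ 2 - y ^+ 2) - 'i * (e * y + e * y).
Proof.
have h : (e - 'i * y) ^+ 2 = e * e + ('i * 'i) * (y * y) - 'i * (e * y + e * y) by cfold; ring.
by rewrite h mulCii; cfold; ring.
Qed.

Lemma inv_sq (a e y : C) : e - 'i * y != 0 -> e + 'i * y != 0 ->
  a / (e + 'i * y) ^+ 2 = a / (e ^+ 2 + y ^+ 2) ^+ 2 * ((e ^+ 2 - y ^+ 2) - 'i * (e * y + e * y)).
Proof.
move=> /eqP u0 /eqP v0; rewrite -Ci_sq -Ci_conj.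
move: ('i : C) u0 v0 => j u0 v0; cfold; field; tauto.
Qed.

Lemma disk_id (x y a b : C) :
  (x - (a + b) / 2) ^+ 2 + y ^+ 2 - ((b - a) / 2) ^+ 2 = (x - a) * (x - b) + y ^+ 2.
Proof.
have h2 : (1 + 1 : C) <> 0 by apply/eqP; rewrite -mulr2n pnatr_eq0.
rewrite -[2 : C]/(1 *+ 2) mulr2n; cfold; field; exact: h2.
Qed.

Lemma disk_le (x y a b : C) : x \is Num.real -> y \is Num.real -> a \is Num.real ->
  b \is Num.real -> a <= b ->
  (`|(x + 'i * y) - (a + b) / 2| <= (b - a) / 2) = ((x - a) * (x - b) + y ^+ 2 <= 0).
Proof.
move=> xR yR aR bR ab.
have r0 : 0 <= (b - a) / 2 by rewrite divr_ge0 // subr_ge0.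
have -> : x + 'i * y - (a + b) / 2 = (x - (a + b) / 2) + 'i * y by cfold; ring.
rewrite -ler_sqr ?nnegrE // normC2_rect ?rpredB ?rpredM ?rpredV ?rpredD ?rpred1 //.
by rewrite -subr_le0 disk_id.
Qed.

Lemma disk_lt (x y a b : C) : x \is Num.real -> y \is Num.real -> a \is Num.real ->
  b \is Num.real -> a <= b ->
  (`|(x + 'i * y) - (a + b) / 2| < (b - a) / 2) = ((x - a) * (x - b) + y ^+ 2 < 0).
Proof.
move=> xR yR aR bR ab.
have r0 : 0 <= (b - a) / 2 by rewrite divr_ge0 // subr_ge0.
have -> : x + 'i * y - (a + b) / 2 = (x - (a + b) / 2) + 'i * y by cfold; ring.
rewrite -ltr_sqr ?nnegrE // normC2_rect ?rpredB ?rpredM ?rpredV ?rpredD ?rpred1 //.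
by rewrite -subr_lt0 disk_id.
Qed.
End Geom.
Section Geom2.
Variable C : numClosedFieldType.
Add Field CF : (CFth C).
Ltac cfold := rewrite ?expr2 -/(cadd C) -/(cmul C) -/(copp C) -/(cinv C) -/(czero C) -/(cone C);
  match goal with |- @eq _ ?a ?b => change (@eq C a b) end.

Lemma fld2 (c Q d : C) : d != 0 -> c * Q ^+ 2 = (d * Q) ^+ 2 * (c / d ^+ 2).
Proof. move=> /eqP d0; cfold; field; exact: d0. Qed.

Lemma geom (r : seq C) (z : C) (a : 'I_(size r) -> C) :
  incr r -> all (fun y => y \is Num.real) r -> (1 < size r)%N -> z \notin Num.real ->
  (forall m, 0 < a m) -> \sum_(m < size r) a m / (z - r`_m) ^+ 2 = 0 -> in_Omega r z.
Proof.
move=> ir rR r1 zR ap hz.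
have rRm : forall m, (m < size r)%N -> r`_m \is Num.real.
  by move=> m mr; apply: (allP rR); apply: mem_nth.
set x := 'Re z; set y := 'Im z.
have xR : x \is Num.real by apply: Creal_Re.
have yR : y \is Num.real by apply: Creal_Im.
have y0 : y != 0 by apply: contraNneq zR => /Creal_ImP.
have ze : z = x + 'i * y := Crect z.
pose e (m : nat) := x - r`_m.
have eR : forall m : 'I_(size r), e m \is Num.real by move=> m; rewrite rpredB ?rRm.
pose N (m : 'I_(size r)) := e m ^+ 2 + y ^+ 2.
have Np : forall m, 0 < N m.
  move=> m; apply: ltr_wpDl; first by rewrite real_exprn_even_ge0.
  by rewrite real_exprn_even_gt0 // y0 orbT.
pose b m := a m / N m ^+ 2.
have bp : forall m, 0 < b m by move=> m; rewrite divr_gt0 // exprn_gt0.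
have bR : forall m, b m \is Num.real by move=> m; apply: gtr0_real.
have hsum : \sum_(m < size r) a m / (z - r`_m) ^+ 2 =
   \sum_(m < size r) (b m * (e m ^+ 2 - y ^+ 2) + 'i * (- (b m * (e m * y + e m * y)))).
  apply: eq_bigr => m _.
  have -> : z - r`_m = e m + 'i * y by rewrite ze /e; cfold; ring.
  have nz : (e m - 'i * y) * (e m + 'i * y) != 0 by rewrite Ci_conj; exact: lt0r_neq0 (Np m).
  rewrite inv_sq; first by rewrite /b /N; cfold; ring.
    by apply: contraNneq nz => ->; rewrite mul0r.
  by apply: contraNneq nz => ->; rewrite mulr0.
rewrite hsum big_split /= -mulr_sumr in hz.
set A := \sum_(m < size r) _ in hz.
set B := \sum_(m < size r) _ in hz.
have AR : A \is Num.real.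
  apply: rpred_sum => m _; apply: rpredM; first exact: bR.
  by apply: rpredB; apply: rpredX => //; exact: eR.
have BR : B \is Num.real.
  apply: rpred_sum => m _; rewrite rpredN; apply: rpredM; first exact: bR.
  by apply: rpredD; apply: rpredM => //; exact: eR.
have A0 : A = 0.
  by have := congr1 (fun w => 'Re w) hz; rewrite /= Re_rect // => ->; apply/Creal_ReP.
have B0 : B = 0.
  by have := congr1 (fun w => 'Im w) hz; rewrite /= Im_rect // => ->; apply/Creal_ImP.
have BE : B = - (y + y) * \sum_(m < size r) b m * e m.
  by rewrite /B mulr_sumr; apply: eq_bigr => m _; cfold; ring.
have E0 : \sum_(m < size r) b m * e m = 0.
  move: B0; rewrite BE => /eqP; rewrite mulf_eq0 oppr_eq0 -mulr2n mulrn_eq0 (negPf y0) /=.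
  by move/eqP.
have Sid : forall al be, \sum_(m < size r) b m * ((e m - al) * (e m - be)) =
     (al * be + y ^+ 2) * \sum_(m < size r) b m.
  move=> al be; rewrite (eq_bigr _ (fun m _ => @id_sum3 _ (b m) (e m) al be y)).
  rewrite !big_split /= sumrN -!mulr_sumr -/A A0 E0 mulr0 subr0 add0r.
  by [].
have Sb : 0 < \sum_(m < size r) b m.
  rewrite (bigD1 (Ordinal (ltnW r1))) //=; apply: ltr_wpDr => //.
  by apply: sumr_ge0 => m _; apply: ltW.
have r0 : (0 < size r)%N by apply: ltnW.
have eD : forall m j, e m - e j = r`_j - r`_m by move=> m j; rewrite /e; cfold; ring.
split.
  rewrite /in_closed_disk -nth0 -nth_last {1}ze.
  have kr : ((size r).-1 < size r)%N by rewrite prednK.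
  rewrite (@disk_le _ x y) ?rRm //; last by apply: incr_le.
  have KR : (x - r`_0) * (x - r`_(size r).-1) + y ^+ 2 \is Num.real.
    by rewrite rpredD ?rpredM ?rpredB ?rRm ?rpredX.
  rewrite real_leNgt ?rpred0 //; apply/negP => K0.
  have E := Sid (e 0%N) (e (size r).-1).
  have : 0 <= \sum_(m < size r) - (b m * ((e m - e 0%N) * (e m - e (size r).-1))).
    apply: sumr_ge0 => m _; rewrite oppr_ge0 pmulr_rle0 // !eD.
    apply: mulr_le0_ge0; rewrite ?subr_le0 ?subr_ge0.
      by apply: incr_le.
    by apply: incr_le; rewrite // -ltnS prednK.
  rewrite sumrN oppr_ge0 E pmulr_lle0 //.
  by rewrite /e (lt_geF K0).
move=> j jr; rewrite /in_open_disk {1}ze.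
have jr' : (j < size r)%N by apply: ltnW.
rewrite (@disk_lt _ x y) ?rRm //; last by apply: ltW; apply: ir.
have KR : (x - r`_j) * (x - r`_j.+1) + y ^+ 2 \is Num.real.
  by rewrite rpredD ?rpredM ?rpredB ?rRm ?rpredX.
rewrite real_ltNge ?rpred0 // => /negP; apply.
have E := Sid (e j) (e j.+1).
have : 0 <= \sum_(m < size r) (b m * ((e m - e j) * (e m - e j.+1))).
  apply: sumr_ge0 => m _; rewrite pmulr_rge0 // !eD.
  case: (leqP m j) => mj.
    apply: mulr_ge0; rewrite subr_ge0; first by apply: incr_le.
    by apply: incr_le => //; apply: leqW.
  apply: mulr_le0; rewrite subr_le0; first by apply: ltW; apply: incr_lt.
  by apply: incr_le.
by rewrite E pmulr_lge0.
Qed.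
End Geom2.
Arguments geom {C}.
Arguments fld2 {C}.

Theorem mainTheorem2 (C : numClosedFieldType) (k : nat) (p q : {poly C}) :
  (2 <= k)%N ->
  p \is a polyOver Num.real -> q \is a polyOver Num.real ->
  size p = k.+1 -> size q = k ->
  real_simple_roots p -> real_simple_roots q ->
  strictly_interlace p q ->
  forall z : C, root (Wr p q) z ->
  forall (alpha : C) (r : seq C), alpha \is Num.real ->
    roots_are (p + alpha%:P * q) r -> incr_reals r -> size r = k ->
    in_Omega r z.
Proof.
move=> k2 pR qR sp sq simp _ [s [t [rps [rqt [sR [tR [sst hi]]]]]]] z Wz alpha r aR rPr [rR ir] sr.
have hs : incr s.
  move=> i; rewrite sst ltnS => it; exact: lt_trans (proj1 (hi i it)) (proj2 (hi i it)).
have ht : incr t.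
  move=> i itt; have it1 : (i < size t)%N by apply: ltnW.
  exact: lt_trans (proj2 (hi i it1)) (proj1 (hi i.+1 itt)).
have us := incr_uniq hs; have ut := incr_uniq ht.
have p0 : p != 0 by rewrite -size_poly_eq0 sp.
have ssp : size p = (size s).+1.
  by apply: split_size => // w /simp /andP[_ ->].
have ss : size s = k by move: ssp; rewrite sp => -[].
have st : size t = k.-1 by move: sst; rewrite ss => ->.
have k0 : (0 < k)%N by apply: leq_trans k2.
have sqt : size q = (size t).+1 by rewrite sq st prednK.
have pe := fact_roots p s ssp us (introT allP (fun w ws => etrans (rps w) ws)).
have qe := fact_roots q t sqt ut (introT allP (fun w ws => etrans (rqt w) ws)).
have lpR : lead_coef p \is Num.real by rewrite lead_coefE; apply/polyOverP.
have lqR : lead_coef q \is Num.real by rewrite lead_coefE; apply/polyOverP.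
have lp0 : lead_coef p != 0 by rewrite lead_coef_eq0.
have lq0 : lead_coef q != 0 by rewrite lead_coef_eq0 -size_poly_eq0 sq -lt0n.
set lp := lead_coef p in pe lpR lp0; set lq := lead_coef q in qe lqR lq0.
set sg := lq * lp.
have hd := d_sign q lp lq s t hs sst hi qe lp0 lqR lq0.
have Wpos : forall x, x \is Num.real -> 0 < sg * (Wr p q).[x].
  move=> x xR; rewrite pe; apply: W_pos => //; first by rewrite ss.
  by rewrite sq ss.
set P := p + alpha%:P * q.
have sPq : (size (alpha%:P * q)%R < size p)%N.
  by rewrite mul_polyC sp; apply: leq_ltn_trans (size_scale_leq _ _) _; rewrite sq.
have sP : size P = (size r).+1 by rewrite size_polyDl // sp sr.
have lP : lead_coef P = lp by rewrite lead_coefDl.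
have ur : uniq r := incr_uniq ir.
have Pe : P = Pp lp r.
  by rewrite -lP; apply: fact_roots => //; apply/allP => w wr; rewrite rPr.
have WP : Wr P q = Wr p q.
  by rewrite /Wr derivD deriv_mulC; apply: id_wr2.
have sqr : (size q <= size r)%N by rewrite sq sr.
have WD := wr_decomp lp r q ur lp0 sqr.
rewrite -Pe WP in WD.
have rRm : forall m, (m < size r)%N -> r`_m \is Num.real.
  by move=> m mr; apply: (allP rR); apply: mem_nth.
have hc : forall m : 'I_(size r), 0 < sg * lcoef lp r q m.
  move=> m; have := Wpos _ (rRm m (ltn_ord m)).
  rewrite WD horner_sum mulr_sumr (bigD1 m) //= big1 ?addr0; last first.
    move=> j jm; rewrite termE (@Qp_vanish _ lp r j m) ?expr0n ?mulr0 //.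
    by rewrite eq_sym.
  rewrite termE pmulr_lgt0 // real_exprn_even_gt0 ?Qp_real ?rRm //.
  by rewrite (Qp_nz lp r m ur lp0) orbT.
have zR : z \notin Num.real.
  apply/negP => zR; have := Wpos z zR; move/rootP: Wz => ->.
  by rewrite mulr0 ltxx.
have zr : forall i, (i < size r)%N -> z - r`_i != 0.
  move=> i0 h0; rewrite subr_eq0; apply: contraNneq zR => ->; exact: rRm.
have Pz : P.[z] != 0.
  by rewrite Pe hornerPp mulf_neq0 //; apply/prodf_neq0 => j _; apply: zr.
apply: (geom r z (fun m : 'I_(size r) => sg * lcoef lp r q m) ir rR) => //.
  by rewrite sr.
have : sg * (Wr p q).[z] = 0 by move/rootP: Wz => ->; rewrite mulr0.
rewrite WD horner_sum mulr_sumr.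
rewrite (eq_bigr (fun m : 'I_(size r) => P.[z] ^+ 2 * (sg * lcoef lp r q m / (z - r`_m) ^+ 2))).
  by rewrite -mulr_sumr => /eqP; rewrite mulf_eq0 expf_eq0 (negPf Pz) andbF /= => /eqP.
move=> m _; rewrite termE.
have := Pp_fact lp r m; rewrite -Pe => /(congr1 (fun w => w.[z])).
rewrite hornerM hornerXsubC => ->.
exact: fld2 (zr m (ltn_ord m)).
Qed.
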